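(* Let $n\ge2$ and let $\phi_1(x),\dots,\phi_n(x)$ be functions of $x$. Let $J=J_{n+1}$ be the $(n+1)\times(n+1)$ matrix, with rows and columns indexed $0,\dots,n$, whose only nonzero entries are $J_{k,n-k}=(-1)^k$ (so $XJY^T=\sum_{k=0}^n(-1)^kx_ky_{n-k}$). For $0\le i\le n$ define the vector of $n+1$ functions $$\delta_i\tilde F(x)=(\underbrace{0,\dots,0}_{i},1,\mathcal I(i+1),\mathcal I(i+1,i+2),\dots,\mathcal I(i+1,i+2,\dots,n)),$$ so $\delta_0\tilde F=\tilde F=(1,\mathcal I(1),\mathcal I(1,2),\dots,\mathcal I(1,\dots,n))$. Let $s(a)=n+1-a$ for $1\le a\le n$, and let $s$ act on iterated integrals by $s\,\mathcal I(a_1\cdots a_m)=\mathcal I(s(a_1)\cdots s(a_m))$ and componentwise on vectors of iterated integrals (fixing constants). Then for $0\le i,j\le n$, $$(\delta_i\tilde F)J(s\delta_j\tilde F)^T=0\ \text{ if } i+j\ne n,\qquad (\delta_i\tilde F)J(s\delta_j\tilde F)^T=(-1)^i\ \text{ if } i+j=n.$$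
   Context: Iterated integrals: $\mathcal I(a_1\cdots a_k)(x)=\int_0^x\phi_{a_1}(x_1)\,dx_1\int_0^{x_1}\phi_{a_2}(x_2)\,dx_2\cdots\int_0^{x_{k-1}}\phi_{a_k}(x_k)\,dx_k$ with $\mathcal I(\varnothing)=1$. *)

(* Defs.v *)
From Stdlib Require Import Reals List Arith.
From Coquelicot Require Import Coquelicot.
Open Scope R_scope.

Fixpoint II (phi : nat -> R -> R) (w : list nat) (x : R) : R :=
  match w with
  | nil => 1
  | a :: w' => RInt (fun t => phi a t * II phi w' t) 0 x
  end.

Definition delta_word (i k : nat) : list nat :=
  map (fun m => (i + 1 + m)%nat) (seq 0 (k - i)).

(* k-th component (k = 0..n) of delta_i F~ :
   0 for k < i, 1 for k = i, I(i+1,...,k) for k > i. *)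
Definition deltaF (phi : nat -> R -> R) (i k : nat) (x : R) : R :=
  if (k <? i)%nat then 0 else II phi (delta_word i k) x.

Definition s_act (n a : nat) : nat := (n + 1 - a)%nat.

(* k-th component of s(delta_j F~): s acts on each iterated integral,
   fixing constants. *)
Definition s_deltaF (phi : nat -> R -> R) (n j k : nat) (x : R) : R :=
  if (k <? j)%nat then 0 else II phi (map (s_act n) (delta_word j k)) x.

Definition Jmat (n k l : nat) : R :=
  if Nat.eqb l (n - k) then (-1) ^ k else 0.

Definition bilinJ (n : nat) (X Y : nat -> R) : R :=
  sum_f_R0 (fun k => sum_f_R0 (fun l => X k * Jmat n k l * Y l) n) n.

(* Main.v *)
Require Import Defs.
From Stdlib Require Import Reals List Arith Lia Lra.
Open Scope R_scope.
From Coquelicot Require Import Coquelicot.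
Open Scope R_scope.

Section S.
Variable n : nat.
Variable phi : nat -> R -> R.
Hypothesis Hphi : forall a : nat, (1 <= a <= n)%nat -> forall t : R, continuous (phi a) t.

Definition good (w : list nat) := forall c, In c w -> (1 <= c <= n)%nat.

Definition Dw (w : list nat) (x : R) : R :=
  match w with nil => 0 | a :: w' => phi a x * II phi w' x end.

Lemma II_deriv : forall w, good w -> forall x,
  is_derive (II phi w) x (Dw w x) /\ continuous (II phi w) x.
Proof.
  induction w as [|a w IH]; intros Hg x.
  - simpl. split. apply (is_derive_const (V:=R_NormedModule) 1 x).
    apply continuous_const.
  - assert (Hgw : good w) by (intros c Hc; apply Hg; simpl; auto).
    assert (Ha : (1 <= a <= n)%nat) by (apply Hg; simpl; auto).
    assert (Hc : forall t, continuous (fun t => phi a t * II phi w t) t).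
    { intros t. apply (continuous_mult (K:=R_AbsRing)). apply Hphi; auto.
      apply (IH Hgw t). }
    assert (Hd : is_derive (II phi (a :: w)) x (Dw (a :: w) x)).
    { simpl. apply (is_derive_RInt (fun t => phi a t * II phi w t)
        (fun y => RInt (fun t => phi a t * II phi w t) 0 y) 0 x).
      apply filter_forall. intros y. apply (RInt_correct (V:=R_CompleteNormedModule)).
      apply ex_RInt_continuous. intros z _. apply Hc. apply Hc. }
    split. exact Hd. apply (ex_derive_continuous (V:=R_NormedModule)). eexists. exact Hd.
Qed.

Lemma II_zero : forall a w, II phi (a :: w) 0 = 0.
Proof. intros. simpl. apply (RInt_point (V:=R_CompleteNormedModule)). Qed.


Definition Bw (k b : nat) : list nat := map (fun q => (b - q)%nat) (seq 0 (b - k)).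

Lemma Aw_S : forall a k, (a < k)%nat -> delta_word a k = (a+1)%nat :: delta_word (a+1) k.
Proof.
  intros a k H. unfold delta_word.
  replace (k - a)%nat with (S (k - (a+1)))%nat by lia. simpl.
  f_equal. lia. rewrite <- seq_shift, map_map. apply map_ext. intros; lia.
Qed.

Lemma Bw_S : forall k b, (k < b)%nat -> Bw k b = b :: Bw k (b-1).
Proof.
  intros k b H. unfold Bw.
  replace (b - k)%nat with (S (b - 1 - k))%nat by lia. simpl.
  f_equal. lia. rewrite <- seq_shift, map_map. apply map_ext. intros; lia.
Qed.

Lemma Bw_nil : forall b, Bw b b = nil.
Proof. intros; unfold Bw; rewrite Nat.sub_diag; reflexivity. Qed.
Lemma Aw_nil : forall a, delta_word a a = nil.
Proof. intros; unfold delta_word; rewrite Nat.sub_diag; reflexivity. Qed.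

Lemma good_A : forall a k, (k <= n)%nat -> good (delta_word a k).
Proof.
  intros a k H c Hc. unfold delta_word in Hc. apply in_map_iff in Hc.
  destruct Hc as [q [<- Hq]]. apply in_seq in Hq. lia.
Qed.

Lemma good_B : forall k b, (b <= n)%nat -> good (Bw k b).
Proof.
  intros k b H c Hc. unfold Bw in Hc. apply in_map_iff in Hc.
  destruct Hc as [q [<- Hq]]. apply in_seq in Hq. lia.
Qed.

Lemma sum_deriv : forall (f f' : nat -> R -> R) N x,
  (forall t, (t <= N)%nat -> is_derive (f t) x (f' t x)) ->
  is_derive (fun y => sum_f_R0 (fun t => f t y) N) x (sum_f_R0 (fun t => f' t x) N).
Proof.
  intros f f' N x. induction N; intros H; simpl.
  - apply H; lia.
  - apply (is_derive_plus (K:=R_AbsRing) (V:=R_NormedModule)).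
    apply IHN; intros; apply H; lia. apply H; lia.
Qed.

Definition Sab (a b : nat) (x : R) : R :=
  sum_f_R0 (fun t => (-1)^(a+t) * (II phi (delta_word a (a+t)) x * II phi (Bw (a+t) b) x)) (b-a).

Lemma Sab_deriv : forall a b x, (a < b)%nat -> (b <= n)%nat ->
  is_derive (Sab a b) x (phi (a+1)%nat x * Sab (a+1) b x + phi b x * Sab a (b-1) x).
Proof.
  intros a b x Hab Hbn.
  set (P := fun t => II phi (delta_word a (a+t))).
  set (Q := fun t => II phi (Bw (a+t) b)).
  assert (Hd : is_derive (Sab a b) x
    (sum_f_R0 (fun t => (-1)^(a+t) * (Dw (delta_word a (a+t)) x * Q t x + P t x * Dw (Bw (a+t) b) x)) (b-a))).
  { unfold Sab. apply (sum_deriv (fun t y => (-1)^(a+t) * (P t y * Q t y))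
      (fun t y => (-1)^(a+t) * (Dw (delta_word a (a+t)) y * Q t y + P t y * Dw (Bw (a+t) b) y))).
    intros t Ht. apply is_derive_scal.
    apply (is_derive_mult (K:=R_AbsRing)).
    apply II_deriv, good_A; lia. apply II_deriv, good_B; lia.
    intros; apply Rmult_comm. }
  destruct (b - a)%nat as [|d] eqn:Ed; [lia|].
  assert (E1 : sum_f_R0 (fun t => (-1)^(a+t) * (Dw (delta_word a (a+t)) x * Q t x)) (S d)
             = phi (a+1)%nat x * Sab (a+1) b x).
  { unfold Sab. rewrite scal_sum. replace (b - (a+1))%nat with d by lia.
    rewrite decomp_sum by lia. simpl Init.Nat.pred.
    rewrite Nat.add_0_r, Aw_nil. simpl Dw. rewrite Rmult_0_l, Rmult_0_r, Rplus_0_l.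
    apply sum_eq. intros t Ht. rewrite Aw_S by lia. simpl Dw. unfold Q.
    replace (a + S t)%nat with (a+1+t)%nat by lia.
    replace (a+1+t)%nat with (S (a + t)) by lia. simpl. ring. }
  assert (E2 : sum_f_R0 (fun t => (-1)^(a+t) * (P t x * Dw (Bw (a+t) b) x)) (S d)
             = phi b x * Sab a (b-1) x).
  { unfold Sab. rewrite scal_sum. replace (b - 1 - a)%nat with d by lia.
    simpl sum_f_R0 at 1. replace (a + S d)%nat with b by lia. rewrite Bw_nil.
    simpl Dw. rewrite Rmult_0_r, Rmult_0_r, Rplus_0_r.
    apply sum_eq. intros t Ht. rewrite Bw_S by lia. simpl Dw. unfold P. ring. }
  assert (E3 : forall t, (-1)^(a+t) * (Dw (delta_word a (a+t)) x * Q t x + P t x * Dw (Bw (a+t) b) x)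
     = (-1)^(a+t) * (Dw (delta_word a (a+t)) x * Q t x) + (-1)^(a+t) * (P t x * Dw (Bw (a+t) b) x)).
  { intros; ring. }
  replace (phi (a+1)%nat x * Sab (a+1) b x + phi b x * Sab a (b-1) x) with
    (sum_f_R0 (fun t => (-1)^(a+t) * (Dw (delta_word a (a+t)) x * Q t x + P t x * Dw (Bw (a+t) b) x)) (S d)).
  exact Hd.
  rewrite <- E1, <- E2, <- sum_plus. apply sum_eq. intros; apply E3.
Qed.

Lemma const_of_deriv0 : forall f : R -> R, (forall y, is_derive f y 0) -> forall x, f x = f 0.
Proof.
  intros f H x.
  assert (Hi := is_RInt_derive f (fun _ => 0) 0 x (fun y _ => H y)
    (fun y _ => continuous_const (U:=R_UniformSpace) (V:=R_UniformSpace) 0 y)).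
  assert (Hc := is_RInt_const (V:=R_NormedModule) 0 x 0).
  apply (is_RInt_unique (V:=R_CompleteNormedModule)) in Hi.
  apply (is_RInt_unique (V:=R_CompleteNormedModule)) in Hc.
  rewrite Hi in Hc. unfold minus, plus, opp, scal in Hc; simpl in Hc.
  unfold mult in Hc; simpl in Hc. lra.
Qed.

Lemma Sab_at0 : forall a b, (a < b)%nat -> Sab a b 0 = 0.
Proof.
  intros a b H. unfold Sab. rewrite (sum_eq _ (fun _ => 0)).
  rewrite sum_cte; ring.
  intros t Ht. destruct t as [|t].
  - rewrite (Bw_S (a+0)) by lia. rewrite (II_zero b). ring.
  - rewrite (Aw_S a) by lia. rewrite (II_zero (a+1)). ring.
Qed.

Lemma Sab_zero : forall d a b x, b = (a + S d)%nat -> (b <= n)%nat -> Sab a b x = 0.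
Proof.
  induction d; intros a b x Eb Hbn;
  (rewrite (const_of_deriv0 (Sab a b)); [apply Sab_at0; lia|]);
  intros y; assert (Hd := Sab_deriv a b y ltac:(lia) Hbn).
  - replace (phi (a+1)%nat y * Sab (a+1) b y + phi b y * Sab a (b-1) y) with 0 in Hd. exact Hd.
    subst b. replace (a + 1 - 1)%nat with a by lia. replace (a+1)%nat with (S a) by lia.
    unfold Sab. rewrite !Nat.sub_diag. simpl sum_f_R0.
    rewrite !Nat.add_0_r, Aw_nil, Bw_nil, Aw_nil, Bw_nil. simpl II. simpl pow. ring.
  - rewrite (IHd (a+1)%nat b y) in Hd by lia. rewrite (IHd a (b-1)%nat y) in Hd by lia.
    rewrite !Rmult_0_r, Rplus_0_r in Hd. exact Hd.
Qed.

End S.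

Lemma sum_zero : forall g N, (forall l, (l <= N)%nat -> g l = 0) -> sum_f_R0 g N = 0.
Proof. intros g N H. rewrite (sum_eq _ (fun _ => 0)) by auto. rewrite sum_cte; ring. Qed.

Lemma delta_sum : forall g N c, (c <= N)%nat -> (forall l, (l <= N)%nat -> l <> c -> g l = 0) -> sum_f_R0 g N = g c.
Proof.
  intros g N c. induction N; intros Hc H.
  - replace c with 0%nat by lia. reflexivity.
  - simpl. destruct (Nat.eq_dec c (S N)) as [->|Hne].
    + rewrite sum_zero. ring. intros l Hl. apply H; lia.
    + rewrite IHN. rewrite (H (S N)) by lia. ring. lia. intros; apply H; lia.
Qed.

Lemma shift_sum : forall a g N, (a <= N)%nat -> (forall k, (k < a)%nat -> g k = 0) ->
  sum_f_R0 g N = sum_f_R0 (fun t => g (a + t)%nat) (N - a).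
Proof.
  induction a; intros g N Ha H.
  - rewrite Nat.sub_0_r. reflexivity.
  - rewrite decomp_sum by lia. rewrite H by lia. rewrite Rplus_0_l.
    rewrite (IHa (fun i => g (S i))) by (try lia; intros; apply H; lia).
    replace (Init.Nat.pred N - a)%nat with (N - S a)%nat by lia.
    apply sum_eq; intros; f_equal; lia.
Qed.

Lemma trunc_sum : forall g L M, (L <= M)%nat -> (forall t, (L < t)%nat -> (t <= M)%nat -> g t = 0) ->
  sum_f_R0 g M = sum_f_R0 g L.
Proof.
  intros g L M HLM H. induction M.
  - replace L with 0%nat by lia. reflexivity.
  - destruct (Nat.eq_dec L (S M)) as [->|Hne]. reflexivity.
    simpl. rewrite IHM. rewrite (H (S M)) by lia. ring. lia. intros; apply H; lia.
Qed.

Lemma map_s_delta : forall n j k, map (s_act n) (delta_word j (n - k)) = Bw k (n - j).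
Proof.
  intros n j k. unfold delta_word, Bw. rewrite map_map.
  replace (n - k - j)%nat with (n - j - k)%nat by lia.
  apply map_ext. intros; unfold s_act; lia.
Qed.

Theorem proposition5p5 (n : nat) (phi : nat -> R -> R)
  (Hn : (2 <= n)%nat)
  (Hphi : forall a : nat, (1 <= a <= n)%nat -> forall t : R, continuous (phi a) t)
  (i j : nat) (Hi : (i <= n)%nat) (Hj : (j <= n)%nat) (x : R) :
  bilinJ n (fun k => deltaF phi i k x) (fun k => s_deltaF phi n j k x)
  = if Nat.eqb (i + j) n then (-1) ^ i else 0.
Proof.
  unfold bilinJ.
  rewrite (sum_eq _ (fun k => deltaF phi i k x * (-1)^k * s_deltaF phi n j (n-k) x)).
  2:{ intros k Hk. rewrite (delta_sum _ n (n-k)) by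
        (first [lia | (intros l _ Hl; unfold Jmat; rewrite (proj2 (Nat.eqb_neq l (n-k)) Hl); ring)]).
      unfold Jmat. rewrite Nat.eqb_refl. reflexivity. }
  destruct (Nat.eqb (i + j) n) eqn:E.
  - apply Nat.eqb_eq in E.
    rewrite (delta_sum _ n i); [| lia |].
    2:{ intros k Hkn Hk; unfold deltaF, s_deltaF.
      destruct (k <? i)%nat eqn:E1; [ring|].
      destruct (n - k <? j)%nat eqn:E2; [ring|].
      apply Nat.ltb_ge in E1; apply Nat.ltb_ge in E2; lia. }
    unfold deltaF, s_deltaF. rewrite Nat.ltb_irrefl.
    replace (n - i)%nat with j by lia. rewrite Nat.ltb_irrefl.
    rewrite !Aw_nil. simpl. ring.
  - apply Nat.eqb_neq in E.
    destruct (Nat.lt_ge_cases n (i + j)) as [Hlt|Hge].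
    + apply sum_zero. intros k Hk; unfold deltaF, s_deltaF;
      destruct (k <? i)%nat eqn:E1; [ring|];
      destruct (n - k <? j)%nat eqn:E2; [ring|];
      apply Nat.ltb_ge in E1; apply Nat.ltb_ge in E2; lia.
    + rewrite (shift_sum i) by (first [lia | (intros k Hk; unfold deltaF;
        rewrite (proj2 (Nat.ltb_lt k i) Hk); ring)]).
      rewrite (trunc_sum _ (n - j - i)) by (first [lia | (intros t Ht Htm; unfold s_deltaF;
        rewrite (proj2 (Nat.ltb_lt (n - (i+t)) j)) by lia; ring)]).
      rewrite <- (Sab_zero n phi Hphi (n - j - i - 1) i (n - j) x) by lia.
      unfold Sab. apply sum_eq. intros t Ht. unfold deltaF, s_deltaF.
      rewrite (proj2 (Nat.ltb_ge (i+t) i)) by lia.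
      rewrite (proj2 (Nat.ltb_ge (n - (i+t)) j)) by lia.
      rewrite map_s_delta. ring.
Qed.
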